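(* Let $P$ be a right LCM monoid and let $T:P\to\mathcal{B}(\mathcal{H})$ be a contractive representation satisfying the following condition: for every finite subset $F\subset P$, \[Z(F)=\sum_{U\subseteq F}(-1)^{|U|}T_{\vee U}T_{\vee U}^*\geq 0 .\] Let $F\subset P$ be a finite set and let $c_F=\max\{|U| : U\subset F,\ \vee U\neq\infty\}$. Then for every $h\in\mathcal{H}$, \[\sum_{p\in F}\|T_p^*h\|^2\leq c_F\|h\|^2.\]
   Context: A monoid $P$ is right LCM if for all $p,q\in P$, either $pP\cap qP=\emptyset$ or $pP\cap qP=rP$ for some $r\in P$. For finite $U\subset P$, write $\vee U=\infty$ if $\bigcap_{p\in U}pP=\emptyset$, and otherwise $\vee U=r$ for some $r$ with $\bigcap_{p\in U}pP=rP$; by convention $\vee\emptyset$ is the identity $e$ of $P$. A contractive representation is a unital monoid homomorphism $p\mapsto T_p$ into the contractions on a Hilbert space $\mathcal{H}$ (so $T_e=I$), and $T_{\vee U}:=0$ when $\vee U=\infty$. Here $|U|$ denotes the cardinality of $U$. *)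

(* Defs.v *)
From HB Require Import structures.
From mathcomp Require Import all_boot all_order all_algebra.
From mathcomp Require Import finmap.
From mathcomp Require Import complex.
From mathcomp Require Import reals.
Set Implicit Arguments. Unset Strict Implicit. Unset Printing Implicit Defensive.
Import Order.TTheory GRing.Theory Num.Theory ComplexField.
Local Open Scope ring_scope.

Definition is_monoid (P : Type) (mul : P -> P -> P) (e : P) : Prop :=
  [/\ forall p q r, mul p (mul q r) = mul (mul p q) r,
      forall p, mul e p = p &
      forall p, mul p e = p].

Definition in_rideal (P : Type) (mul : P -> P -> P) (p x : P) : Prop :=
  exists y, x = mul p y.

Definition right_LCM (P : Type) (mul : P -> P -> P) : Prop :=
  forall p q : P,
    (forall x, ~ (in_rideal mul p x /\ in_rideal mul q x)) \/
    (exists r, forall x, (in_rideal mul p x /\ in_rideal mul q x) <-> in_rideal mul r x).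

(* [join] is a choice of "∨U" for every finite U ⊆ P: None encodes ∞.
   ∨U = ∞ iff ⋂_{p∈U} pP = ∅; otherwise ∨U = r with ⋂_{p∈U} pP = rP;
   and ∨∅ = e by convention. *)
Definition is_join (P : choiceType) (mul : P -> P -> P) (e : P)
    (join : {fset P} -> option P) : Prop :=
  [/\ join fset0 = Some e,
      forall U : {fset P}, join U = None <->
        (forall x, ~ (forall p, p \in U -> in_rideal mul p x)) &
      forall (U : {fset P}) (r : P), join U = Some r ->
        forall x, (forall p, p \in U -> in_rideal mul p x) <-> in_rideal mul r x].

Definition is_inner_product (R : rcfType) (V : lmodType R[i]) (ip : V -> V -> R[i]) : Prop :=
  [/\ forall (a : R[i]) (x y z : V), ip (a *: x + y) z = a * ip x z + ip y z,
      forall x y : V, ip x y = (ip y x)^*,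
      forall x : V, 0 <= ip x x &
      forall x : V, ip x x = 0 -> x = 0].

Definition ipnorm (R : rcfType) (V : lmodType R[i]) (ip : V -> V -> R[i]) (x : V) : R :=
  Num.sqrt (complex.Re (ip x x)).

Definition ip_complete (R : rcfType) (V : lmodType R[i]) (ip : V -> V -> R[i]) : Prop :=
  forall u : nat -> V,
    (forall eps : R, 0 < eps -> exists N, forall m n, (N <= m)%N -> (N <= n)%N ->
        ipnorm ip (u m - u n) < eps) ->
    exists l : V, forall eps : R, 0 < eps -> exists N, forall n, (N <= n)%N ->
        ipnorm ip (u n - l) < eps.

Definition is_hilbert (R : rcfType) (V : lmodType R[i]) (ip : V -> V -> R[i]) : Prop :=
  is_inner_product ip /\ ip_complete ip.

Definition is_linear_op (R : rcfType) (V : lmodType R[i]) (A : V -> V) : Prop :=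
  forall (a : R[i]) (x y : V), A (a *: x + y) = a *: A x + A y.

Definition is_adjoint (R : rcfType) (V : lmodType R[i]) (ip : V -> V -> R[i])
    (A B : V -> V) : Prop :=
  forall x y : V, ip (A x) y = ip x (B y).

Definition is_contraction (R : rcfType) (V : lmodType R[i]) (ip : V -> V -> R[i])
    (A : V -> V) : Prop :=
  is_linear_op A /\ forall x, ipnorm ip (A x) <= ipnorm ip x.

Definition contractive_rep (P : Type) (mul : P -> P -> P) (e : P)
    (R : rcfType) (V : lmodType R[i]) (ip : V -> V -> R[i])
    (T Ts : P -> V -> V) : Prop :=
  [/\ forall p, is_contraction ip (T p),
      forall p, is_adjoint ip (T p) (Ts p),
      forall x, T e x = x &
      forall p q x, T (mul p q) x = T p (T q x)].

(* T_{∨U} T_{∨U}^* applied to x, with T_∞ := 0 *)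
Definition TTs (P : Type) (R : rcfType) (V : lmodType R[i]) (T Ts : P -> V -> V)
    (j : option P) (x : V) : V :=
  if j is Some r then T r (Ts r x) else 0.

Definition Zop (P : choiceType) (R : rcfType) (V : lmodType R[i]) (T Ts : P -> V -> V)
    (join : {fset P} -> option P) (F : {fset P}) (x : V) : V :=
  \sum_(U <- fpowerset F) (-1) ^+ #|` U| *: TTs T Ts (join U) x.

Definition cF (P : choiceType) (join : {fset P} -> option P) (F : {fset P}) : nat :=
  \max_(U <- fpowerset F | join U != None) #|` U|.

(* Main.v *)
Require Import Defs.
From HB Require Import structures.
From mathcomp Require Import all_boot all_order all_algebra.
From mathcomp Require Import finmap.
From mathcomp Require Import complex.
From mathcomp Require Import reals.
From mathcomp Require Import boolp zify lra.
Import Order.TTheory GRing.Theory Num.Theory ComplexField.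
Local Open Scope ring_scope.
Set Implicit Arguments. Unset Strict Implicit. Unset Printing Implicit Defensive.

Section Pow.
Local Open Scope fset_scope.
Variables (K : choiceType).

Lemma sum_fpowU1 (R : zmodType) (a : K) (A : {fset K}) (f : {fset K} -> R) : a \notin A ->
  \sum_(V <- fpowerset (a |` A)) f V = \sum_(V <- fpowerset A) (f V + f (a |` V)).
Proof.
move=> aA.
rewrite (big_fsetID _ (fun V : {fset K} => a \notin V)) big_split /=. congr (_ + _)%R.
  apply: eq_fbigl => V; rewrite !inE /= !fpowersetE.
  apply/andP/idP => [[/fsubsetP H aV]|/fsubsetP H].
    apply/fsubsetP => x xV; have := H x xV; rewrite !inE; case: eqP => [ex|] //; by rewrite -ex xV in aV.
  split; first by apply/fsubsetP => x /H xA; rewrite !inE xA orbT.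
  by apply: contra aA => /H.
have -> : [fset x in fpowerset (a |` A) | ~~ (a \notin x)] = [fset a |` V | V in fpowerset A].
  apply/fsetP => V; rewrite !inE /= fpowersetE negbK.
  apply/andP/imfsetP => [[/fsubsetP H aV]|[W /= WA ->]].
    exists (V `\ a) => /=.
      rewrite fpowersetE; apply/fsubsetP => x; rewrite !inE => /andP[xa /H].
      by rewrite !inE (negbTE xa).
    apply/fsetP => x; rewrite !inE; case: eqP => // -> ; by rewrite aV.
  split; last by rewrite !inE eqxx.
  by rewrite fsetUS //; move: WA; rewrite fpowersetE.
rewrite [LHS](big_imfset _ _ (fun V => f V)) /=; last first.
  move=> V W; rewrite /= !fpowersetE => /fsubsetP VA /fsubsetP WA E.
  apply/fsetP => x; have := congr1 (fun S => x \in S) E; rewrite /= !inE.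
  case: eqP => [->|]; last by [].
  move=> _; apply/idP/idP => [/VA|/WA]; by rewrite (negbTE aA).
by [].
Qed.

Lemma sign_pair (R' : ringType) (G : {fset K}) (g : K) (f : {fset K} -> R') : g \in G ->
  (forall V, V `<=` G `\ g -> f (g |` V) = f V) ->
  \sum_(V <- fpowerset G) (-1) ^+ #|` V| * f V = 0.
Proof.
move=> gG Hf; rewrite -(fsetD1K gG) sum_fpowU1 ?fsetD11 //.
rewrite big_seq big1 // => V; rewrite fpowersetE => VG.
have gV : g \notin V by apply/negP => /(fsubsetP VG); rewrite fsetD11.
by rewrite Hf // cardfsU1 gV exprS mulN1r mulNr addrN.
Qed.

Lemma mobius0 (R' : ringType) (H : {fset K}) (g : {fset K} -> R') :
  \sum_(X <- fpowerset H) \sum_(Y <- fpowerset (H `\` X)) (-1) ^+ #|` Y| * g (X `|` Y) = g fset0.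
Proof.
move: H; apply: fset1U_rect => [|a H aH IH].
  by rewrite fpowerset0 big_seq_fset1 fset0D fpowerset0 big_seq_fset1 expr0 mul1r fsetU0.
rewrite sum_fpowU1 // -IH big_seq [RHS]big_seq; apply: eq_bigr => X; rewrite fpowersetE => XH.
have aX : a \notin X by apply: contra aH => /(fsubsetP XH).
have E1 : (a |` H) `\` X = a |` (H `\` X).
  apply/fsetP => z; rewrite !inE; case: eqP => // ->; by rewrite (negbTE aX).
have E2 : (a |` H) `\` (a |` X) = H `\` X.
  apply/fsetP => z; rewrite !inE; case: eqP => [->|_] /=; [by rewrite (negbTE aH) andbF | by []].
rewrite E1 E2 sum_fpowU1; last by rewrite !inE (negbTE aH) andbF.
rewrite big_split /= -addrA -big_split /= [X in (_ + X)%R]big_seq [X in (_ + X)%R]big1 ?addr0 // => Y.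
rewrite fpowersetE => YH.
have aY : a \notin Y by apply: contra aH => /(fsubsetP YH); rewrite !inE => /andP[].
have -> : X `|` (a |` Y) = (a |` X) `|` Y by apply/fsetP => z; rewrite !inE orbCA orbA.
by rewrite cardfsU1 aY exprS mulN1r mulNr addNr.
Qed.

Lemma sign_all (R' : ringType) (G : {fset K}) (Q : pred K) :
  \sum_(V <- fpowerset G) (-1) ^+ #|` V| * ((all Q V)%:R : R') = (~~ has Q G)%:R.
Proof.
case: (boolP (has Q G)) => [/hasP[g gG Qg]|hn].
  apply: (@sign_pair _ G g (fun V => ((all Q V)%:R : R')) gG) => V _ /=; congr ((nat_of_bool _) %:R).
  apply/idP/idP => /allP H; apply/allP => x xV; first by apply: H; rewrite !inE xV orbT.
  by move: (H x) xV; rewrite !inE; case: eqP => [->|] //= _; apply.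
rewrite (big_fsetD1 fset0) /=; last by rewrite fpowersetE fsub0set.
rewrite [X in (_ + X)%R]big_seq [X in (_ + X)%R]big1 ?addr0.
  by rewrite expr0 mul1r.
move=> V; rewrite !inE fpowersetE => /andP[V0 VG].
case: (boolP (all Q V)) => [/allP AV|]; last by rewrite mulr0.
have [x xV] : exists x, x \in V.
  by case/fset0Pn: V0 => x xV; exists x.
by case/hasP: hn; exists x; [apply: (fsubsetP VG) | apply: AV].
Qed.
End Pow.

Section Core.
Local Open Scope fset_scope.
Variables (P : choiceType) (mul : P -> P -> P) (e : P) (join : {fset P} -> option P).
Variables (R : realDomainType) (a : P -> R).
Hypothesis Hj : is_join mul e join.
Hypothesis Hinv : forall r r', (forall x, in_rideal mul r x <-> in_rideal mul r' x) -> a r = a r'.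

Definition Dv p x := in_rideal mul p x.
Definition Jv (U : {fset P}) x := forall p, p \in U -> Dv p x.
Definition Av (o : option P) : R := if o is Some r then a r else 0.
Definition al U := Av (join U).

Lemma join_some U r : join U = Some r -> forall x, Jv U x <-> Dv r x.
Proof. by case: Hj => _ _ Hs; apply: Hs. Qed.

Lemma join_none U : join U = None <-> forall x, ~ Jv U x.
Proof. by case: Hj => _ Hn _; apply: Hn. Qed.

Lemma al_inv U U' : (forall x, Jv U x <-> Jv U' x) -> al U = al U'.
Proof.
move=> H; rewrite /al.
case E: (join U) => [r|]; case E': (join U') => [r'|] //=.
- apply: Hinv => x; have := join_some E x; have := join_some E' x; have := H x; rewrite /Dv; tauto.
- have HN := (join_none U').1 E'.
  by exfalso; apply: (HN (mul r e)); apply/H; apply/(join_some E); exists e.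
- have HN := (join_none U).1 E.
  by exfalso; apply: (HN (mul r' e)); apply/H; apply/(join_some E'); exists e.
Qed.

Variable F : {fset P}.

Definition beta X := \sum_(Y <- fpowerset (F `\` X)) (-1) ^+ #|` Y| * al (X `|` Y).

Lemma mob W : W `<=` F -> al W = \sum_(X <- fpowerset F | W `<=` X) beta X.
Proof.
move=> WF.
rewrite -{1}(fsetU0 W) -(mobius0 (F `\` W) (fun S => al (W `|` S))).
rewrite [RHS]big_fset_condE.
have -> : [fset X in fpowerset F | W `<=` X] = [fset W `|` X | X in fpowerset (F `\` W)].
  apply/fsetP => X; rewrite !inE /= fpowersetE.
  apply/andP/imfsetP => [[XF WX]|[Y /= YFW ->]].
    exists (X `\` W) => /=; first by rewrite fpowersetE fsetSD.
    by rewrite fsetUDl fsetDv fsetD0; apply/esym/fsetUidPr.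
  split; last by rewrite fsubsetUl.
  rewrite fsubUset WF /=; move: YFW; rewrite fpowersetE => /fsubset_trans; apply.
  exact: fsubsetDl.
rewrite [RHS](big_imfset _ _ beta) /=; last first.
  move=> Y1 Y2; rewrite /= !fpowersetE => /fsubsetP H1 /fsubsetP H2 E.
  apply/fsetP => z; have := congr1 (fun S => z \in S) E; rewrite /= !inE.
  case: (boolP (z \in W)) => zW /=; last by [].
  move=> _; apply/idP/idP => [/H1|/H2]; by rewrite !inE zW.
apply: eq_bigr => Y _; rewrite /beta fsetDDl.
by apply: eq_bigr => Z _; rewrite fsetUA.
Qed.

Definition clo X p := forall x, Jv X x -> Dv p x.

Lemma beta_supp X : X `<=` F -> beta X != 0 ->
  (forall p, p \in F -> clo X p -> p \in X) /\ exists x, Jv X x.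
Proof.
move=> XF bX.
have Hcl : forall p, p \in F -> clo X p -> p \in X.
  move=> p pF cp; case: (boolP (p \in X)) => // pX; exfalso; move/eqP: bX; apply.
  apply: (@sign_pair _ _ (F `\` X) p (fun Y => al (X `|` Y))); first by rewrite !inE pX pF.
  move=> Y _; apply: al_inv => x; split => H q; rewrite !inE => qin.
    by apply: H; rewrite !inE; case/orP: qin => ->; rewrite ?orbT.
  case/orP: qin => [qX|/orP[/eqP ->|qY]].
  - by apply: H; rewrite !inE qX.
  - by apply: cp => r rX; apply: H; rewrite !inE rX.
  - by apply: H; rewrite !inE qY !orbT.
split => //.
case: (pselect (exists x, Jv X x)) => // nJ; exfalso.
have XF' : X = F.
  apply/eqP; rewrite eqEfsubset XF /=; apply/fsubsetP => p pF; apply: Hcl => // x Jx.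
  by exfalso; apply: nJ; exists x.
move/eqP: bX; apply; rewrite /beta XF' fsetDv fpowerset0 big_seq_fset1 fsetU0 /al.
have -> : join F = None by apply/join_none => x Jx; apply: nJ; exists x; rewrite XF'.
by rewrite mulr0.
Qed.

Lemma card_le X : X `<=` F -> (exists x, Jv X x) -> (#|` X| <= cF join F)%N.
Proof.
move=> XF [x Jx]; rewrite /cF; apply: leq_bigmax_seq.
  by rewrite fpowersetE.
by apply/eqP => /join_none H; exact: H x Jx.
Qed.

Definition Gm (m : nat) : {fset P} :=
  [fset odflt e (join U) | U in [fset U in fpowerset F | (m <= #|` U|)%N && (join U != None)]].

Lemma memGm m g : g \in Gm m -> exists U, [/\ U `<=` F, (m <= #|` U|)%N & join U = Some g].
Proof.
case/imfsetP => U /=; rewrite !inE fpowersetE => /andP[UF /andP[mU jU]] ->.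
by exists U; split => //; case: (join U) jU.
Qed.

Lemma inGm m U g : U `<=` F -> (m <= #|` U|)%N -> join U = Some g -> g \in Gm m.
Proof.
move=> UF mU jU; apply/imfsetP; exists U; last by rewrite /= jU.
by rewrite !inE fpowersetE UF mU jU.
Qed.

Definition Xp (V : {fset P}) : {fset P} := [fset p in F | `[< clo V p >]].

Lemma XpF V : Xp V `<=` F.
Proof. by apply/fsubsetP => p; rewrite !inE => /andP[]. Qed.

Lemma sub_Xp V g U : g \in V -> U `<=` F -> join U = Some g -> U `<=` Xp V.
Proof.
move=> gV UF jU; apply/fsubsetP => q qU; rewrite !inE (fsubsetP UF q qU) /=.
apply/asboolP => y JVy; have : Dv g y by apply: JVy.
by move/(join_some jU); apply.
Qed.

Lemma al_Xp m V : V `<=` Gm m -> al V = al (Xp V).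
Proof.
move=> VG; apply: al_inv => x; split.
  by move=> JV q; rewrite !inE => /andP[_ /asboolP cq]; apply: cq.
move=> JX g gV; have [U [UF _ jU]] := memGm (fsubsetP VG g gV).
apply/(join_some jU) => q qU; apply: JX; exact: (fsubsetP (sub_Xp gV UF jU)).
Qed.

Lemma Zm_eq m : \sum_(V <- fpowerset (Gm m)) (-1) ^+ #|` V| * al V =
  \sum_(X <- fpowerset F) beta X * ((#|` X| < m)%N)%:R.
Proof.
transitivity (\sum_(V <- fpowerset (Gm m)) (-1) ^+ #|` V| *
   \sum_(X <- fpowerset F) beta X * ((Xp V `<=` X))%:R).
  rewrite big_seq [RHS]big_seq; apply: eq_bigr => V; rewrite fpowersetE => VG.
  rewrite (al_Xp VG) (mob (XpF V)) big_mkcond; congr (_ * _); apply: eq_bigr => X _.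
  by case: (_ `<=` _); rewrite ?mulr1 ?mulr0.
under eq_bigr do rewrite mulr_sumr.
rewrite exchange_big big_seq [RHS]big_seq; apply: eq_bigr => X; rewrite fpowersetE => XF.
case: (eqVneq (beta X) 0) => [->|bX].
  by rewrite mul0r big1 // => V _; rewrite mul0r mulr0.
have [Hcl [x0 Jx0]] := beta_supp XF bX.
pose Q := fun g => `[< forall x, Jv X x -> Dv g x >].
transitivity (beta X * \sum_(V <- fpowerset (Gm m)) (-1) ^+ #|` V| * ((all Q V)%:R)).
  rewrite mulr_sumr big_seq [RHS]big_seq; apply: eq_bigr => V; rewrite fpowersetE => VG.
  rewrite mulrCA; congr (_ * (_ * _)); congr ((nat_of_bool _)%:R).
  apply/idP/allP.
    move=> sub g gV; apply/asboolP => x JXx.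
    have [U [UF _ jU]] := memGm (fsubsetP VG g gV).
    apply/(join_some jU) => q qU; apply: JXx; apply: (fsubsetP sub).
    exact: (fsubsetP (sub_Xp gV UF jU)).
  move=> AQ; apply/fsubsetP => p; rewrite !inE => /andP[pF /asboolP cp].
  apply: Hcl => // x JXx; apply: cp => g gV.
  by move: (AQ g gV) => /asboolP; apply.
rewrite sign_all ltnNge; congr (_ * (nat_of_bool (~~ _))%:R).
apply/hasP/idP.
  case=> g gG Qg; have [U [UF mU jU]] := memGm gG.
  have UX : U `<=` X.
    apply/fsubsetP => q qU; apply: Hcl; first exact: (fsubsetP UF).
    move=> x JXx; move/asboolP: Qg => Qg.
    by have := Qg x JXx; move/(join_some jU); apply.
  exact: (leq_trans mU (fsubset_leq_card UX)).
move=> mX; case E: (join X) => [r|]; last by have := (join_none X).1 E x0 Jx0.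
exists r; first exact: (inGm XF mX E).
by apply/asboolP => x JXx; apply/(join_some E).
Qed.

Lemma count_nat (k c : nat) : (\sum_(m < c) nat_of_bool (k < m.+1)%N)%N = (c - k)%N.
Proof.
elim: c => [|c IH]; first by rewrite big_ord0.
by rewrite big_ord_recr /= IH ltnS; case: leqP => h /=; lia.
Qed.

Hypothesis HZ : forall G : {fset P}, 0 <= \sum_(U <- fpowerset G) (-1) ^+ #|` U| * al U.

Lemma core : \sum_(p <- F) a p <= (cF join F)%:R * a e.
Proof.
have ae : a e = al fset0 by rewrite /al; case: Hj => -> _ _.
have ap : forall p, a p = al [fset p].
  move=> p; case E: (join [fset p]) => [r|]; last first.
    exfalso; apply: ((join_none _).1 E (mul p e)) => q; rewrite inE => /eqP ->.
    by exists e.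
  rewrite /al E /=; apply: Hinv => x; split => H.
    by apply/(join_some E) => q; rewrite inE => /eqP ->.
  by apply: ((join_some E x).2 H); rewrite inE.
rewrite ae (mob (fsub0set F)).
have -> : \sum_(p <- F) a p = \sum_(p <- F) \sum_(X <- fpowerset F) beta X * ((p \in X))%:R.
  rewrite big_seq [RHS]big_seq; apply: eq_bigr => p pF.
  rewrite ap (mob _) ?fsub1set // big_mkcond; apply: eq_bigr => X _; rewrite fsub1set.
  by case: (p \in X); rewrite ?mulr1 ?mulr0.
rewrite exchange_big /=.
have E1 : forall X, X \in fpowerset F ->
    \sum_(i <- F) beta X * ((i \in X))%:R = beta X * (#|` X|)%:R.
  move=> X; rewrite fpowersetE => XF; rewrite -mulr_sumr -natr_sum; congr (_ * _%:R).
  rewrite -(big_fset_incl _ XF); last by move=> x _ /negbTE ->.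
  by rewrite card_fset_sum1 big_seq [RHS]big_seq; apply: eq_bigr => x ->.
rewrite big_seq; under eq_bigr => X XF do rewrite (E1 X XF).
rewrite -big_seq.
have -> : \sum_(X <- fpowerset F | fset0 `<=` X) beta X = \sum_(X <- fpowerset F) beta X.
  by apply: eq_bigl => X; rewrite fsub0set.
rewrite -subr_ge0 mulr_sumr -sumrB.
have -> : \sum_(X <- fpowerset F) ((cF join F)%:R * beta X - beta X * (#|` X|)%:R) =
    \sum_(m < cF join F) \sum_(X <- fpowerset F) beta X * ((#|` X| < m.+1)%N)%:R.
  rewrite [RHS]exchange_big /= big_seq [RHS]big_seq; apply: eq_bigr => X; rewrite fpowersetE => XF.
  case: (eqVneq (beta X) 0) => [->|bX].
    by rewrite mulr0 mul0r subr0 big1 // => m _; rewrite mul0r.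
  have [_ Jx] := beta_supp XF bX; have cX := card_le XF Jx.
  by rewrite -mulr_sumr -natr_sum count_nat natrB // mulrBr (mulrC _ (beta X)).
by apply: sumr_ge0 => m _; rewrite -Zm_eq; apply: HZ.
Qed.
End Core.

Section Hil.
Variables (R : realType) (V : lmodType R[i]) (ip : V -> V -> R[i]).
Hypothesis Hip : is_inner_product ip.

Lemma ReJ (z : R[i]) : complex.Re (z^*) = complex.Re z.
Proof. by case: z. Qed.
Lemma ReD (z w : R[i]) : complex.Re (z + w) = complex.Re z + complex.Re w.
Proof. by case: z; case: w. Qed.
Lemma ReN (z : R[i]) : complex.Re (- z) = - complex.Re z.
Proof. by case: z. Qed.
Lemma Re0 : complex.Re (0 : R[i]) = 0.
Proof. by []. Qed.
Lemma ReMsign (k : nat) (z : R[i]) : complex.Re ((-1) ^+ k * z) = (-1) ^+ k * complex.Re z.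
Proof.
elim: k => [|k IH]; first by rewrite !expr0 !mul1r.
by rewrite !exprS !mulN1r !mulNr -IH ReN.
Qed.
Lemma Re_ge0 (z : R[i]) : 0 <= z -> 0 <= complex.Re z.
Proof. by rewrite lecE => /andP[]. Qed.

Lemma ip_lin a x y z : ip (a *: x + y) z = a * ip x z + ip y z.
Proof. by case: Hip => H _ _ _; apply: H. Qed.
Lemma ip_sym x y : ip x y = (ip y x)^*.
Proof. by case: Hip => _ H _ _; apply: H. Qed.
Lemma ip_pos x : 0 <= ip x x.
Proof. by case: Hip => _ _ H _; apply: H. Qed.
Lemma ip0l z : ip 0 z = 0.
Proof.
have := ip_lin 1 0 0 z; rewrite scale1r addr0 mul1r => H.
by apply: (addrI (ip 0 z)); rewrite addr0 -H.
Qed.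
Lemma ipDl x y z : ip (x + y) z = ip x z + ip y z.
Proof. by have := ip_lin 1 x y z; rewrite scale1r mul1r. Qed.
Lemma ipZl c x z : ip (c *: x) z = c * ip x z.
Proof. by have := ip_lin c x 0 z; rewrite addr0 ip0l addr0. Qed.
Lemma ipNl x z : ip (- x) z = - ip x z.
Proof. by rewrite -scaleN1r ipZl mulN1r. Qed.
Lemma ipDr x y z : ip z (x + y) = ip z x + ip z y.
Proof. by rewrite ip_sym ipDl rmorphD [ip z x]ip_sym [ip z y]ip_sym. Qed.
Lemma ipNr x z : ip z (- x) = - ip z x.
Proof. by rewrite ip_sym ipNl rmorphN [ip z x]ip_sym. Qed.
Lemma nrm2 x : ipnorm ip x ^+ 2 = complex.Re (ip x x).
Proof. by rewrite /ipnorm sqr_sqrtr // Re_ge0 // ip_pos. Qed.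
Lemma nrm_ge0 x : 0 <= ipnorm ip x.
Proof. exact: sqrtr_ge0. Qed.

Lemma weak_eq y1 y2 : (forall x, ip x y1 = ip x y2) -> ipnorm ip y1 = ipnorm ip y2.
Proof. by move=> H; rewrite /ipnorm H ip_sym H ReJ. Qed.

Lemma adj_contr (A B : V -> V) : is_contraction ip A -> is_adjoint ip A B ->
  forall y, ipnorm ip (B y) ^+ 2 <= ipnorm ip y ^+ 2.
Proof.
move=> [_ cA] adj y; set s := B y.
have h1 : ipnorm ip (A s) ^+ 2 <= ipnorm ip s ^+ 2.
  by rewrite !expr2; apply: ler_pM => //; apply: nrm_ge0.
have h0 := Re_ge0 (ip_pos (A s - y)).
rewrite ipDl ipNl !ipDr !ipNr [ip (A s) y]adj -/s in h0.
rewrite (ip_sym y (A s)) [ip (A s) y]adj -/s in h0.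
rewrite !nrm2 in h1 *; move: h0 h1.
move: (ip (A s) (A s)) (ip s s) (ip y y) => [u1 u2] [v1 v2] [w1 w2] /=.
lra.
Qed.
End Hil.


Theorem lemma4p1
  (P : choiceType) (mul : P -> P -> P) (e : P)
  (R : realType) (V : lmodType R[i]) (ip : V -> V -> R[i])
  (T Ts : P -> V -> V) (join : {fset P} -> option P) :
  is_monoid mul e ->
  right_LCM mul ->
  is_join mul e join ->
  is_hilbert ip ->
  contractive_rep mul e ip T Ts ->
  (forall (G : {fset P}) (x : V), 0 <= ip (Zop T Ts join G x) x) ->
  forall (F : {fset P}) (h : V),
    \sum_(p <- F) ipnorm ip (Ts p h) ^+ 2 <= (cF join F)%:R * ipnorm ip h ^+ 2.
Proof.
move=> Hmon _ Hjoin [Hip _] [Hc Hadj Te Tmul] HZ F h.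
pose a r := ipnorm ip (Ts r h) ^+ 2.
have ae : a e = ipnorm ip h ^+ 2.
  by rewrite /a; congr (_ ^+ 2); apply: (weak_eq Hip) => x; rewrite -Hadj Te.
have Hts : forall p q x y, ip y (Ts (mul p q) x) = ip y (Ts q (Ts p x)).
  by move=> p q x y; rewrite -Hadj Tmul Hadj Hadj.
have Hle : forall r r', in_rideal mul r' r -> a r <= a r'.
  move=> r r' [u ->]; rewrite /a (weak_eq Hip (Hts r' u h)).
  exact: (adj_contr Hip (Hc u) (Hadj u)).
have rr : forall r, in_rideal mul r r by move=> r; exists e; case: Hmon => _ _ ->.
have Hinv : forall r r', (forall x, in_rideal mul r x <-> in_rideal mul r' x) -> a r = a r'.
  move=> r r' H; apply/le_anti; rewrite !Hle //; [exact: (H r').2 | exact: (H r).1].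
have HZ' : forall G : {fset P}, 0 <= \sum_(U <- fpowerset G) (-1) ^+ #|` U| * al join a U.
  move=> G; have := Re_ge0 (HZ G h); rewrite /Zop.
  rewrite (big_morph (fun x => ip x h) (fun x y => ipDl Hip x y h) (ip0l Hip h)).
  rewrite (big_morph (@complex.Re R) (@ReD R) (@Re0 R)).
  congr (_ <= _); apply: eq_bigr => U _; rewrite ipZl // ReMsign; congr (_ * _).
  rewrite /al /Av /TTs; case: (join U) => [r|] /=; last by rewrite ip0l.
  by rewrite Hadj -nrm2.
rewrite -ae.
exact: (core Hjoin Hinv F HZ').
Qed.
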